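(* Let $k\ge 1$ and $m\ge 0$ be integers such that $2^{m+\nu_2(k)}>k$. Then the smallest integer $n\ge k$ such that $2^m$ divides $\binom{n}{k}$ is $n=2^{m+\nu_2(k)}$.
   Context: $\nu_2(x)$ denotes the 2-adic valuation of a positive integer $x$, i.e. the exponent of the largest power of $2$ dividing $x$. *)

(* Defs.v *)
From mathcomp Require Import all_boot.
Definition nu2 (x : nat) : nat := logn 2 x.

(* Main.v *)
From mathcomp Require Import all_boot.
Require Import Defs.
From mathcomp Require Import zify.

Lemma ext_sum x n : x <= n ->
  \sum_(1 <= i < x.+1) x %/ 2 ^ i = \sum_(1 <= i < n.+1) x %/ 2 ^ i.
Proof.
move=> hxn; rewrite [RHS](big_cat_nat _ (n:=x.+1)) //= ?ltnS //.
rewrite -[LHS]addn0; congr (_ + _); symmetry.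
rewrite big_nat_cond big1 // => i /andP[/andP[hi _] _].
apply: divn_small; apply: leq_trans hi _; exact: ltnW (ltn_expl _ (isT : 1 < 2)).
Qed.

Lemma gsum a b N :
  \sum_(0 <= i < N) ((a < i) && (i < b) : nat) <= minn N b - a.+1.
Proof.
elim: N => [|N IH]; first by rewrite big_geq.
rewrite big_nat_recr //=.
case: (boolP ((a < N) && (N < b))) => [/andP[h1 h2]|h]; lia.
Qed.

Lemma val_bound k n m : 0 < k -> k <= n -> n < 2 ^ (m + logn 2 k) ->
  logn 2 'C(n, k) < m.
Proof.
move=> hk hkn hn; set a := logn 2 k.
have ha : 2 ^ a <= k by apply: dvdn_leq => //; exact: pfactor_dvdnn.
have Cpos : 0 < 'C(n, k) by rewrite bin_gt0.
have e := congr1 (logn 2) (bin_fact hkn).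
rewrite !lognM ?fact_gt0 ?muln_gt0 ?fact_gt0 // !logn_fact // in e.
rewrite (@ext_sum _ _ hkn) (@ext_sum _ _ (leq_subr k n)) in e.
have key : \sum_(1 <= i < n.+1) n %/ 2 ^ i <=
   \sum_(1 <= i < n.+1) (k %/ 2 ^ i + (n - k) %/ 2 ^ i + ((a < i) && (i < m + a) : nat)).
  apply: leq_sum => i _.
  have hnk : n = k + (n - k) by rewrite subnKC.
  case: (leqP i a) => hia.
    rewrite [X in X %/ _]hnk divnDl; first by lia.
    apply: dvdn_trans (pfactor_dvdnn 2 k); exact: dvdn_exp2l.
  case: (leqP (m + a) i) => him.
    rewrite divn_small //; apply: leq_trans hn _; rewrite leq_exp2l //.
  rewrite /=.
  rewrite [X in X %/ _ <= _]hnk; exact: leq_divDl.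
rewrite !big_split /= in key.
have g1 := gsum a (m + a) n.+1.
rewrite big_ltn //= in g1.
have hm : 0 < m.
  case: m hn {key g1} => // hn; rewrite add0n in hn; rewrite /a in ha; lia.
lia.
Qed.

Theorem mainTheorem1 (k m : nat) (hk : 1 <= k) (hkm : k < 2 ^ (m + nu2 k)) :
  let N := 2 ^ (m + nu2 k) in
  [/\ k <= N, 2 ^ m %| 'C(N, k) &
      forall n : nat, k <= n -> 2 ^ m %| 'C(n, k) -> N <= n].
Proof.
rewrite /nu2 in hkm *; set N := 2 ^ (m + logn 2 k); split.
- exact: ltnW.
- have Cpos : 0 < 'C(N, k) by rewrite bin_gt0 ltnW.
  rewrite pfactor_dvdn //.
  have e := mul_bin_diag N k.-1.
  rewrite prednK // in e.
  have NC : 0 < 'C(N.-1, k.-1) by rewrite bin_gt0; rewrite /N; lia.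
  have := congr1 (logn 2) e.
  rewrite !lognM ?expn_gt0 // /N pfactorK //; lia.
- move=> n hkn hd; rewrite leqNgt; apply/negP => hn.
  have := @val_bound k n m hk hkn hn.
  rewrite pfactor_dvdn ?bin_gt0 // in hd; lia.
Qed.
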